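(* For every integer $d>3$, the lattice $[2 \; d+1 \; 2d]$ does not represent $-2$.
   Context: Notation: $[a\; b\; c]$ with $a,b,c\in\mathbb{Z}$ denotes a lattice of rank 2 with a basis whose Gram matrix is $\begin{pmatrix} a & b\\ b & c\end{pmatrix}$. A lattice represents an integer $m$ if it contains an element $x$ with $x^2=m$. *)

(* Defs.v *)
From mathcomp Require Import all_boot all_order all_algebra.
Set Implicit Arguments. Unset Strict Implicit. Unset Printing Implicit Defensive.
Import Order.TTheory GRing.Theory Num.Theory.
Local Open Scope ring_scope.

(* Gram matrix [[a, b], [b, c]] of the rank-2 lattice [a b c]. *)
Definition gram2 (a b c : int) : 'M[int]_2 :=
  \matrix_(i < 2, j < 2)
    (if (i == 0%N :> nat) && (j == 0%N :> nat) then a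
     else if (i == 1%N :> nat) && (j == 1%N :> nat) then c else b).

Definition lat_represents (G : 'M[int]_2) (m : int) : Prop :=
  exists v : 'rV[int]_2, (v *m G *m v^T) 0 0 = m.

(* Main.v *)
Require Import Defs.
From mathcomp Require Import all_boot all_order all_algebra.
From mathcomp Require Import zify ring.
Import Order.TTheory GRing.Theory Num.Theory.
Local Open Scope ring_scope.

Lemma prod_m1 (a b : int) : a * b = -1 -> (a = 1 /\ b = -1) \/ (a = -1 /\ b = 1).
Proof.
move=> h.
have hb : (b < 0 \/ b = 0 \/ 0 < b)%R by lia.
have [ha|[ha|ha]] : (a < 0 \/ a = 0 \/ 0 < a)%R by lia.
all: case: hb => [hb|[hb|hb]]; try (subst; lia).
all: idtac.
Qed.

Theorem lemma3p3 (d : int) :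
  3 < d -> ~ lat_represents (gram2 2 (d + 1) (2 * d)) (-2).
Proof.
move=> hd [v].
rewrite !mxE !big_ord_recr !big_ord0 /= !mxE !big_ord_recr !big_ord0 /= !mxE /=.
set x := v 0 (widen_ord _ _); set y := v 0 ord_max.
move=> h.
clearbody x y.
have : (x + y) * (x + d * y) = -1.
  apply: (@mulfI _ 2) => //. rewrite -[RHS]h. ring.
case/prod_m1 => [[h1 h2]|[h1 h2]].
- have e : (d - 1) * y = -2 by nia.
  have [hy|[hy|hy]] : (y <= -1 \/ y = 0 \/ 1 <= y)%R by lia.
  - have : 0 <= (d - 3) * (-1 - y) by apply: mulr_ge0; lia.
    lia.
  - subst y; rewrite mulr0 in e; lia.
  - have : 0 <= (d - 3) * (y - 1) by apply: mulr_ge0; lia.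
    lia.
- have e : (d - 1) * y = 2 by nia.
  have [hy|[hy|hy]] : (y <= -1 \/ y = 0 \/ 1 <= y)%R by lia.
  - have : 0 <= (d - 3) * (-1 - y) by apply: mulr_ge0; lia.
    lia.
  - subst y; rewrite mulr0 in e; lia.
  - have : 0 <= (d - 3) * (y - 1) by apply: mulr_ge0; lia.
    lia.
Qed.
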